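(* Let $S,I:\mathbb{R}\to\mathbb{R}$ be $2\pi$-periodic Lipschitz functions and suppose there are $\alpha_0\in(0,\pi)$, $p,q\ge1$, $c_1,c_2>0$, $c_3\in(0,1]$ with \[ S(\theta)\le-c_1(\pi-\theta)^p\ \ (\theta\in[\alpha_0,\pi]),\qquad S(\theta)\ge c_1(\theta+\pi)^p\ \ (\theta\in[-\pi,-\alpha_0]), \] \[ 0\le I(\theta)\le c_2(\pi-|\theta|)^q\ \ (\theta\in[-\pi,\pi]),\qquad \min_{|\phi|\le\max\{|\theta|,\alpha_0\}}I(\phi)\ge c_3I(\theta)\ \ (\theta\in[-\pi,\pi]). \] Let $(\theta_i(t))$ solve \[ \dot\theta_i=\omega_i+\frac{\kappa}{N}\sum_{j=1}^NI(\theta_j)S(\theta_i),\qquad\theta_i(0)=\theta_i^0,\quad i=1,\dots,N, \] let $R(t)=\frac1N\sum_jI(\theta_j(t))$, $R_0=R(0)$, $\|\Omega\|_\infty=\max_i|\omega_i|$. Suppose $R_0>0$ and \[ \kappa>\max\left\{\frac{2(2c_2)^{p/q}}{c_1c_3}\cdot\frac{\|\Omega\|_\infty}{R_0^{1+p/q}},\ \frac{2}{c_1c_3(\pi-\alpha_0)^p}\cdot\frac{\|\Omega\|_\infty}{R_0}\right\}. \] Then (a) $R(t)>\frac{c_3R_0}{2}$ for all $t\ge0$, and (b) $\sup_{t\ge0}\theta_i(t)-\inf_{t\ge0}\theta_i(t)<2\pi$ for all $i=1,\dots,N$.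
   Context: This is the general Winfree model with influence function $I$ and sensitivity function $S$; $R$ is the average influence. *)

(* Defs.v *)
From Stdlib Require Import Reals.
Open Scope R_scope.

(* Real power x^p for x >= 0, with the convention 0^p = 0 (p >= 1 here).
   Stdlib's Rpower 0 p = 1, so we patch the value at 0. *)
Definition rpow (x p : R) : R := if Rle_dec x 0 then 0 else Rpower x p.

Fixpoint rsum (n : nat) (f : nat -> R) : R :=
  match n with O => 0 | S m => rsum m f + f m end.

Fixpoint rmaxabs (n : nat) (f : nat -> R) : R :=
  match n with O => 0 | S m => Rmax (rmaxabs m f) (Rabs (f m)) end.

Definition periodic2pi (f : R -> R) : Prop := forall x, f (x + 2 * PI) = f x.
Definition lipschitz (f : R -> R) : Prop :=
  exists L, forall x y, Rabs (f x - f y) <= L * Rabs (x - y).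

Definition is_glb (E : R -> Prop) (m : R) : Prop :=
  (forall x, E x -> m <= x) /\ (forall b, (forall x, E x -> b <= x) -> b <= m).

Definition avg_infl (N : nat) (I : R -> R) (theta : nat -> R -> R) (t : R) : R :=
  / INR N * rsum N (fun j => I (theta j t)).

(* Main.v *)
Require Import Defs.
From Stdlib Require Import Reals Lra Lia Classical.
Open Scope R_scope.

Lemma rpow_nonneg x p : 0 <= rpow x p.
Proof. unfold rpow; destruct (Rle_dec x 0); [lra|]. unfold Rpower; left; apply exp_pos. Qed.

Lemma rpow_pos_eq x p : 0 < x -> rpow x p = Rpower x p.
Proof. intro; unfold rpow; destruct (Rle_dec x 0); [lra|auto]. Qed.

Lemma rpow_pos x p : 0 < x -> 0 < rpow x p.
Proof. intro; rewrite rpow_pos_eq; auto; unfold Rpower; apply exp_pos. Qed.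

Lemma rpow_mono a b p : 0 < p -> 0 <= a <= b -> rpow a p <= rpow b p.
Proof.
  intros Hp [Ha Hb]. destruct (Rle_dec a 0).
  - unfold rpow at 1; destruct (Rle_dec a 0); [apply rpow_nonneg| lra].
  - rewrite !rpow_pos_eq by lra. apply Rle_Rpower_l; lra.
Qed.

Lemma rpow_zero p : rpow 0 p = 0.
Proof. unfold rpow; destruct (Rle_dec 0 0); lra. Qed.

Lemma per_nat f : periodic2pi f -> forall n x, f (x + 2*PI*INR n) = f x.
Proof.
  intros Hf n; induction n; intro x.
  - simpl; f_equal; ring.
  - rewrite S_INR. replace (x + 2*PI*(INR n + 1)) with ((x + 2*PI*INR n) + 2*PI) by ring.
    rewrite Hf; auto.
Qed.

Lemma per_Z f : periodic2pi f -> forall k x, f (x + 2*PI*IZR k) = f x.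
Proof.
  intros Hf k x. destruct k as [|p|p].
  - simpl; f_equal; ring.
  - replace (IZR (Z.pos p)) with (INR (Pos.to_nat p)) by (rewrite INR_IPR; reflexivity). apply per_nat; auto.
  - replace (IZR (Z.neg p)) with (- INR (Pos.to_nat p)) by (rewrite INR_IPR; reflexivity).
    rewrite <- (per_nat f Hf (Pos.to_nat p) (x + 2*PI*(- INR (Pos.to_nat p)))).
    f_equal; ring.
Qed.

Lemma per_Zm f : periodic2pi f -> forall k x, f (x - 2*PI*IZR k) = f x.
Proof.
  intros Hf k x. rewrite <- (per_Z f Hf k (x - 2*PI*IZR k)). f_equal; ring.
Qed.

Lemma floor_red y : exists K : Z, 0 <= y - 2*PI*IZR K < 2*PI.
Proof.
  exists (up (y/(2*PI)) - 1)%Z. rewrite minus_IZR.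
  destruct (archimed (y/(2*PI))) as [H1 H2].
  assert (HP : 0 < PI) by apply PI_RGT_0.
  set (u := IZR (up (y / (2 * PI)))) in *.
  assert (E : y = 2*PI * (y/(2*PI))) by (field; lra).
  split.
  - assert (u - 1 <= y/(2*PI)) by lra.
    assert (2*PI*(u-1) <= 2*PI*(y/(2*PI))) by (apply Rmult_le_compat_l; lra). lra.
  - assert (y/(2*PI) < u) by lra.
    assert (2*PI*(y/(2*PI)) < 2*PI*u) by (apply Rmult_lt_compat_l; lra). lra.
Qed.


Lemma rsum_le n f g : (forall j, (j < n)%nat -> f j <= g j) -> rsum n f <= rsum n g.
Proof.
  induction n; intros H; simpl; [lra|].
  assert (rsum n f <= rsum n g) by (apply IHn; intros; apply H; lia).
  assert (f n <= g n) by (apply H; lia). lra.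
Qed.

Lemma rsum_lt n f g : (forall j, (j < n)%nat -> f j <= g j) ->
  (exists j, (j < n)%nat /\ f j < g j) -> rsum n f < rsum n g.
Proof.
  induction n; intros H [j [Hj Hlt]]; [lia|]. simpl.
  destruct (Nat.eq_dec j n).
  - subst. assert (rsum n f <= rsum n g) by (apply rsum_le; intros; apply H; lia). lra.
  - assert (rsum n f < rsum n g) by (apply IHn; [intros; apply H; lia| exists j; split; [lia|auto]]).
    assert (f n <= g n) by (apply H; lia). lra.
Qed.

Lemma rsum_lin n f a b : rsum n (fun j => a * (f j - b)) = a * (rsum n f - INR n * b).
Proof. induction n; cbn [rsum]; [simpl; ring|]. rewrite IHn. rewrite S_INR. ring. Qed.

Lemma rmaxabs_ge n f : forall j, (j < n)%nat -> Rabs (f j) <= rmaxabs n f.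
Proof.
  induction n; intros j Hj; [lia|]. simpl.
  destruct (Nat.eq_dec j n).
  - subst; apply Rmax_r.
  - eapply Rle_trans; [apply IHn; lia| apply Rmax_l].
Qed.

Lemma rmaxabs_nonneg n f : 0 <= rmaxabs n f.
Proof. induction n; simpl; [lra|]. eapply Rle_trans; [apply IHn|apply Rmax_l]. Qed.
Definition Cont (f : R -> R) := forall t, 0 <= t -> forall eps, 0 < eps ->
  exists d, 0 < d /\ forall s, 0 <= s -> Rabs (s - t) < d -> Rabs (f s - f t) < eps.

Lemma Cont_of_deriv f f' : (forall t, 0 < t -> derivable_pt_lim f t (f' t)) ->
  (forall eps, 0 < eps -> exists delta, 0 < delta /\
       forall t, 0 <= t < delta -> Rabs (f t - f 0) < eps) -> Cont f.
Proof.
  intros Hd H0 t Ht eps He. destruct (Rle_lt_or_eq_dec 0 t Ht) as [Htp|Ht0].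
  - assert (Hc : continuity_pt f t).
    { apply derivable_continuous_pt. exists (f' t). apply Hd; auto. }
    destruct (Hc eps He) as [alp [Ha Hal]]. exists alp; split; auto.
    intros s Hs Hst. destruct (Req_dec s t) as [->|Hne].
    + replace (f t - f t) with 0 by ring. rewrite Rabs_R0; auto.
    + apply (Hal s). split; [split; [exact I| auto]| exact Hst].
  - subst t. destruct (H0 eps He) as [d [Hd0 Hdd]]. exists d; split; auto.
    intros s Hs Hst. apply Hdd. split; auto. rewrite Rminus_0_r, Rabs_right in Hst; lra.
Qed.

Lemma Cont_plus f g : Cont f -> Cont g -> Cont (fun t => f t + g t).
Proof.
  intros Hf Hg t Ht eps He.
  destruct (Hf t Ht (eps/2)) as [d1 [Hd1 H1]]; [lra|].
  destruct (Hg t Ht (eps/2)) as [d2 [Hd2 H2]]; [lra|].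
  exists (Rmin d1 d2); split; [apply Rmin_pos; auto|].
  intros s Hs Hst. assert (A:=H1 s Hs (Rlt_le_trans _ _ _ Hst (Rmin_l _ _))).
  assert (B:=H2 s Hs (Rlt_le_trans _ _ _ Hst (Rmin_r _ _))).
  replace (f s + g s - (f t + g t)) with ((f s - f t) + (g s - g t)) by ring.
  eapply Rle_lt_trans; [apply Rabs_triang|]. lra.
Qed.

Lemma Cont_const c : Cont (fun _ => c).
Proof. intros t Ht eps He. exists 1; split; [lra|]. intros. replace (c - c) with 0 by ring. rewrite Rabs_R0; auto. Qed.

Lemma Cont_scal a f : Cont f -> Cont (fun t => a * f t).
Proof.
  intros Hf t Ht eps He.
  destruct (Hf t Ht (eps/(Rabs a + 1))) as [d [Hd H]].
  { apply Rdiv_lt_0_compat; auto. pose proof (Rabs_pos a); lra. }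
  exists d; split; auto. intros s Hs Hst.
  replace (a * f s - a * f t) with (a * (f s - f t)) by ring. rewrite Rabs_mult.
  assert (A := H s Hs Hst). pose proof (Rabs_pos a).
  assert (Rabs a * Rabs (f s - f t) <= Rabs a * (eps / (Rabs a + 1))).
  { apply Rmult_le_compat_l; lra. }
  assert (Rabs a * (eps / (Rabs a + 1)) < eps).
  { replace (Rabs a * (eps / (Rabs a + 1))) with (eps * (Rabs a / (Rabs a + 1))) by (field; lra).
    assert (Rabs a / (Rabs a + 1) < 1). { apply (Rmult_lt_reg_r (Rabs a + 1)); [lra|].
      unfold Rdiv. rewrite Rmult_assoc, Rinv_l by lra. lra. }
    nra. }
  lra.
Qed.

Lemma Cont_lip F f : lipschitz F -> Cont f -> Cont (fun t => F (f t)).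
Proof.
  intros [L HL] Hf t Ht eps He.
  destruct (Hf t Ht (eps/(Rabs L + 1))) as [d [Hd H]].
  { apply Rdiv_lt_0_compat; auto. pose proof (Rabs_pos L); lra. }
  exists d; split; auto. intros s Hs Hst.
  eapply Rle_lt_trans; [apply HL|].
  assert (A := H s Hs Hst). pose proof (Rabs_pos L). pose proof (Rabs_pos (f s - f t)).
  assert (L * Rabs (f s - f t) <= Rabs L * (eps / (Rabs L + 1))).
  { eapply Rle_trans; [apply Rmult_le_compat_r; [lra| apply RRle_abs]|].
    apply Rmult_le_compat_l; lra. }
  assert (Rabs L * (eps / (Rabs L + 1)) < eps).
  { replace (Rabs L * (eps / (Rabs L + 1))) with (eps * (Rabs L / (Rabs L + 1))) by (field; lra).
    assert (Rabs L / (Rabs L + 1) < 1). { apply (Rmult_lt_reg_r (Rabs L + 1)); [lra|].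
      unfold Rdiv. rewrite Rmult_assoc, Rinv_l by lra. lra. }
    nra. }
  lra.
Qed.

Lemma Cont_rsum n (F : nat -> R -> R) : (forall j, (j < n)%nat -> Cont (F j)) ->
  Cont (fun t => rsum n (fun j => F j t)).
Proof.
  induction n; intros H; simpl.
  - apply Cont_const.
  - apply (Cont_plus (fun t => rsum n (fun j => F j t)) (F n)).
    + apply IHn; intros; apply H; lia.
    + apply H; lia.
Qed.

Lemma first_time g L t1 : Cont g -> g 0 > L -> 0 <= t1 -> g t1 <= L ->
  exists T, 0 < T <= t1 /\ g T <= L /\ forall t, 0 <= t < T -> g t > L.
Proof.
  intros Hg H0 Ht1 H1.
  set (E := fun t => 0 <= t <= t1 /\ forall tau, 0 <= tau <= t -> g tau > L).
  assert (HE0 : E 0). { split; [lra|]. intros tau Htau. replace tau with 0 by lra. auto. }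
  assert (Hb : bound E). { exists t1. intros x [Hx _]. lra. }
  destruct (completeness E Hb (ex_intro _ 0 HE0)) as [T [HTu HTl]].
  assert (HT0 : 0 <= T) by (apply HTu; auto).
  assert (HT1 : T <= t1). { apply HTl. intros x [Hx _]; lra. }
  assert (Hbef : forall t, 0 <= t < T -> g t > L).
  { intros t Ht. destruct (classic (exists e, E e /\ t < e)) as [[e [[He1 He2] Hte]]|Hn].
    - apply He2; lra.
    - exfalso. assert (T <= t); [|lra]. apply HTl. intros x Hx.
      destruct (Rle_or_lt x t); auto. exfalso; apply Hn; exists x; auto. }
  assert (HgT : g T <= L).
  { destruct (Rle_or_lt (g T) L) as [|HgT]; auto. exfalso.
    destruct (Hg T HT0 (g T - L)) as [d [Hd Hdd]]; [lra|].
    assert (Hnear : forall s, 0 <= s -> Rabs (s - T) < d -> g s > L).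
    { intros s Hs Hst. assert (A := Hdd s Hs Hst). apply Rabs_def2 in A. lra. }
    destruct (Req_dec T t1) as [->|HTne]; [lra|].
    set (t' := Rmin (T + d/2) t1).
    assert (Et' : E t').
    { unfold t'; split; [split; [apply Rmin_glb; lra| apply Rmin_r]|].
      intros tau Htau. destruct (Rlt_or_le tau T); [apply Hbef; lra|].
      apply Hnear; [lra|]. rewrite Rabs_right by lra.
      assert (Rmin (T + d/2) t1 <= T + d/2) by apply Rmin_l. lra. }
    assert (t' <= T) by (apply HTu; auto).
    unfold t' in H. revert H. apply Rmin_case; lra. }
  exists T. split; [split; auto|split; auto].
  destruct (Req_dec T 0) as [->|]; [lra|lra].
Qed.

Lemma last_time f m t0 t1 : Cont f -> 0 <= t0 < t1 -> f t0 <= m -> m < f t1 ->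
  exists s, t0 <= s < t1 /\ f s = m /\ forall t, s < t <= t1 -> f t > m.
Proof.
  intros Hf Ht H0 H1.
  set (E := fun t => t0 <= t <= t1 /\ f t <= m).
  assert (HE0 : E t0) by (split; [lra|auto]).
  assert (Hb : bound E). { exists t1. intros x [Hx _]. lra. }
  destruct (completeness E Hb (ex_intro _ t0 HE0)) as [s [Hsu Hsl]].
  assert (Hs0 : t0 <= s) by (apply Hsu; auto).
  assert (Hs1 : s <= t1). { apply Hsl. intros x [Hx _]; lra. }
  assert (Haft : forall t, s < t <= t1 -> f t > m).
  { intros t Ht'. destruct (Rle_or_lt (f t) m) as [Hle|]; auto.
    assert (t <= s) by (apply Hsu; split; [lra|auto]). lra. }
  assert (Hfs : f s <= m).
  { destruct (Rle_or_lt (f s) m) as [|Hgt]; auto. exfalso.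
    destruct (Hf s ltac:(lra) (f s - m)) as [d [Hd Hdd]]; [lra|].
    assert (s <= s - d); [|lra]. apply Hsl. intros x [[Hx1 Hx2] Hx3].
    destruct (Rle_or_lt x (s - d)); auto. exfalso.
    assert (x <= s) by (apply Hsu; split; [lra|auto]).
    assert (A := Hdd x ltac:(lra) ltac:(rewrite Rabs_left1 by lra; lra)).
    apply Rabs_def2 in A. lra. }
  assert (Hslt : s < t1) by (destruct (Req_dec s t1) as [->|]; lra).
  assert (Hfs2 : m <= f s).
  { destruct (Rle_or_lt m (f s)) as [|Hlt]; auto. exfalso.
    destruct (Hf s ltac:(lra) (m - f s)) as [d [Hd Hdd]]; [lra|].
    set (t := Rmin (s + d/2) t1).
    assert (Rmin (s + d/2) t1 <= s + d/2) by apply Rmin_l.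
    assert (Rmin (s + d/2) t1 <= t1) by apply Rmin_r.
    assert (s < Rmin (s + d/2) t1) by (apply Rmin_glb_lt; lra).
    assert (A := Hdd t ltac:(unfold t; lra) ltac:(unfold t; rewrite Rabs_right by lra; lra)).
    apply Rabs_def2 in A. assert (f t > m) by (apply Haft; unfold t; lra). lra. }
  exists s. split; [lra| split; [lra| auto]].
Qed.

Lemma barrier f f' a c t0 T : Cont f -> 0 <= t0 ->
  (forall t, t0 < t < T -> derivable_pt_lim f t (f' t)) ->
  (forall t, t0 < t < T -> a <= f t <= c -> f' t < 0) ->
  a <= c -> f t0 < c ->
  forall t, t0 <= t <= T -> f t <= Rmax (f t0) a.
Proof.
  intros Hf Ht0 Hd Hneg Hac Hfc t Ht.
  set (m := Rmax (f t0) a).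
  assert (Hm1 : f t0 <= m) by apply Rmax_l.
  assert (Hm2 : a <= m) by apply Rmax_r.
  assert (Hm3 : m <= c) by (apply Rmax_lub; lra).
  destruct (Rle_or_lt (f t) m) as [|Hgt]; auto. exfalso.
  assert (Htt : t0 < t) by (destruct (Req_dec t t0) as [->|]; lra).
  destruct (last_time f m t0 t Hf ltac:(lra) Hm1 Hgt) as [s [Hs [Hfs Haft]]].
  destruct (Rle_lt_or_eq_dec t0 s (proj1 Hs)) as [Hlt|Heq].
  - assert (Hl : f' s < 0) by (apply Hneg; lra).
    destruct (Hd s ltac:(lra) (- f' s / 2)) as [del Hdel]; [lra|].
    set (h := Rmin del (t - s) / 2).
    assert (Hh0 : 0 < h). { unfold h. apply Rmin_case; [destruct del; simpl; lra| lra]. }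
    assert (Hh1 : h < del). { unfold h. assert (Rmin del (t - s) <= del) by apply Rmin_l.
      destruct del; simpl in *; lra. }
    assert (Hh2 : h <= t - s). { unfold h. assert (Rmin del (t - s) <= t - s) by apply Rmin_r. lra. }
    assert (A := Hdel h ltac:(lra) ltac:(rewrite Rabs_right; lra)).
    assert (B : f (s + h) > m) by (apply Haft; lra).
    apply Rabs_def2 in A.
    assert (0 < (f (s + h) - f s) / h) by (apply Rdiv_lt_0_compat; lra). lra.
  - subst s. assert (Hmc : m < c) by lra.
    destruct (Hf t0 Ht0 (c - m)) as [d1 [Hd1 Hdd1]]; [lra|].
    set (u := t0 + Rmin (t - t0) d1 / 2).
    assert (Rmin (t - t0) d1 <= t - t0) by apply Rmin_l.
    assert (Rmin (t - t0) d1 <= d1) by apply Rmin_r.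
    assert (0 < Rmin (t - t0) d1) by (apply Rmin_pos; lra).
    assert (Hu1 : t0 < u < t) by (unfold u; lra).
    assert (Hfu : f u > m) by (apply Haft; lra).
    assert (Hfu2 : f u < c).
    { assert (A := Hdd1 u ltac:(lra) ltac:(rewrite Rabs_right; unfold u; lra)).
      apply Rabs_def2 in A. lra. }
    destruct (Hf t0 Ht0 (f u - m)) as [d2 [Hd2 Hdd2]]; [lra|].
    set (tau := t0 + Rmin (u - t0) d2 / 2).
    assert (Rmin (u - t0) d2 <= u - t0) by apply Rmin_l.
    assert (Rmin (u - t0) d2 <= d2) by apply Rmin_r.
    assert (0 < Rmin (u - t0) d2) by (apply Rmin_pos; lra).
    assert (Htau : t0 < tau < u) by (unfold tau; lra).
    assert (Hftau : f tau < f u).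
    { assert (A := Hdd2 tau ltac:(lra) ltac:(rewrite Rabs_right; unfold tau; lra)).
      apply Rabs_def2 in A. lra. }
    destruct (MVT_cor2 f f' tau u ltac:(lra)) as [xi [Hxi1 Hxi2]].
    { intros c' Hc'. apply Hd. lra. }
    assert (Hfxi : f' xi < 0).
    { apply Hneg; [lra|]. split.
      - assert (f xi > m) by (apply Haft; lra). lra.
      - assert (A := Hdd1 xi ltac:(lra) ltac:(rewrite Rabs_right; unfold u in *; lra)).
        apply Rabs_def2 in A. lra. }
    assert (f' xi * (u - tau) < 0) by (assert (0 < u - tau) by lra; nra).
    lra.
Qed.
Lemma dshift f x l b : derivable_pt_lim f x l -> derivable_pt_lim (fun t => f t - b) x l.
Proof.
  unfold derivable_pt_lim; intros H eps He; destruct (H eps He) as [d Hd]; exists d.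
  intros h Hh Hhd. replace (f (x + h) - b - (f x - b)) with (f (x + h) - f x) by ring. auto.
Qed.

Lemma dneg f x l b : derivable_pt_lim f x l -> derivable_pt_lim (fun t => b - f t) x (- l).
Proof.
  unfold derivable_pt_lim; intros H eps He; destruct (H eps He) as [d Hd]; exists d.
  intros h Hh Hhd. replace ((b - f (x + h) - (b - f x)) / h - - l) with (- ((f (x + h) - f x) / h - l)) by (field; auto).
  rewrite Rabs_Ropp; auto.
Qed.

Lemma range_lem (g : R -> R) A B : (forall t, 0 <= t -> A <= g t <= B) -> B - A < 2*PI ->
  exists M m, is_lub (fun x => exists t, 0 <= t /\ x = g t) M /\
              is_glb (fun x => exists t, 0 <= t /\ x = g t) m /\ M - m < 2*PI.
Proof.
  intros H HAB.
  set (E := fun x => exists t, 0 <= t /\ x = g t).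
  assert (HE : exists x, E x) by (exists (g 0); exists 0; split; [lra|auto]).
  assert (Hb : bound E). { exists B. intros x [t [Ht ->]]. apply H; auto. }
  destruct (completeness E Hb HE) as [M [HMu HMl]].
  set (E' := fun x => E (- x)).
  assert (HE' : exists x, E' x) by (exists (- g 0); unfold E'; exists 0; split; [lra|ring]).
  assert (Hb' : bound E'). { exists (- A). intros x [t [Ht Hx]]. assert (A <= g t) by (apply H; auto). lra. }
  destruct (completeness E' Hb' HE') as [M' [HM'u HM'l]].
  exists M, (- M'). split; [split; auto|]. split; [split|].
  - intros x Hx. assert (- x <= M') by (apply HM'u; unfold E'; rewrite Ropp_involutive; auto). lra.
  - intros b Hb2. assert (M' <= - b); [|lra]. apply HM'l. intros x Hx. assert (b <= - x) by (apply Hb2; auto). lra.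
  - assert (M <= B). { apply HMl. intros x [t [Ht ->]]. apply H; auto. }
    assert (M' <= - A). { apply HM'l. intros x [t [Ht Hx]]. assert (A <= g t) by (apply H; auto). lra. }
    lra.
Qed.

Lemma rsum_const n c : rsum n (fun _ => c) = INR n * c.
Proof. induction n; cbn [rsum]; [simpl; ring|]. rewrite IHn, S_INR. ring. Qed.

Lemma Rpower_inv y z : 0 < y -> Rpower (/ y) z = / Rpower y z.
Proof. intro. unfold Rpower. rewrite ln_Rinv by auto. rewrite <- exp_Ropp. f_equal; ring. Qed.

Lemma Rpower_lt1 r z : 0 < r < 1 -> 0 < z -> Rpower r z < 1.
Proof.
  intros Hr Hz. unfold Rpower. rewrite <- exp_0. apply exp_increasing.
  assert (ln r < 0). { rewrite <- ln_1. apply ln_increasing; lra. } nra.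
Qed.

Lemma Cont_bminus b f : Cont f -> Cont (fun t => b - f t).
Proof.
  intros Hf t Ht eps He. destruct (Hf t Ht eps He) as [d [Hd H]]. exists d; split; auto.
  intros s Hs Hst. replace (b - f s - (b - f t)) with (- (f s - f t)) by ring.
  rewrite Rabs_Ropp; auto.
Qed.

Lemma absle' a b : Rabs a < b -> - b < a < b.
Proof. unfold Rabs; destruct (Rcase_abs a); lra. Qed.

Lemma absle a b : Rabs a <= b -> - b <= a <= b.
Proof. unfold Rabs; destruct (Rcase_abs a); lra. Qed.

Lemma Rdiv_nonneg a b : 0 <= a -> 0 < b -> 0 <= a / b.
Proof. intros. unfold Rdiv. apply Rmult_le_pos; auto. left; apply Rinv_0_lt_compat; auto. Qed.

Theorem theorem2p7
  (S I : R -> R) (alpha0 p q c1 c2 c3 kappa : R) (N : nat)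
  (omega : nat -> R) (theta : nat -> R -> R)
  (HSper : periodic2pi S) (HIper : periodic2pi I)
  (HSlip : lipschitz S) (HIlip : lipschitz I)
  (Ha0 : 0 < alpha0 < PI) (Hp : 1 <= p) (Hq : 1 <= q)
  (Hc1 : 0 < c1) (Hc2 : 0 < c2) (Hc3 : 0 < c3 <= 1)
  (HS1 : forall th, alpha0 <= th <= PI -> S th <= - c1 * rpow (PI - th) p)
  (HS2 : forall th, - PI <= th <= - alpha0 -> S th >= c1 * rpow (th + PI) p)
  (HI1 : forall th, - PI <= th <= PI -> 0 <= I th <= c2 * rpow (PI - Rabs th) q)
  (HI2 : forall th, - PI <= th <= PI ->
           forall phi, Rabs phi <= Rmax (Rabs th) alpha0 -> I phi >= c3 * I th)
  (HN : (1 <= N)%nat)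
  (Hode : forall i, (i < N)%nat -> forall t, 0 < t ->
     derivable_pt_lim (theta i) t
       (omega i + kappa / INR N * rsum N (fun j => I (theta j t)) * S (theta i t)))
  (Hcont0 : forall i, (i < N)%nat -> forall eps, 0 < eps ->
     exists delta, 0 < delta /\
       forall t, 0 <= t < delta -> Rabs (theta i t - theta i 0) < eps)
  (HR0 : 0 < avg_infl N I theta 0)
  (Hkappa : kappa > Rmax
     (2 * rpow (2 * c2) (p / q) / (c1 * c3) * rmaxabs N omega
        / rpow (avg_infl N I theta 0) (1 + p / q))
     (2 / (c1 * c3 * rpow (PI - alpha0) p) * rmaxabs N omega
        / avg_infl N I theta 0)) :
  (forall t, 0 <= t -> avg_infl N I theta t > c3 * avg_infl N I theta 0 / 2) /\
  (forall i, (i < N)%nat ->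
     exists M m,
       is_lub (fun x => exists t, 0 <= t /\ x = theta i t) M /\
       is_glb (fun x => exists t, 0 <= t /\ x = theta i t) m /\
       M - m < 2 * PI).
Proof.
  set (Om := rmaxabs N omega) in *.
  set (R0 := avg_infl N I theta 0) in *.
  set (L := c3 * R0 / 2).
  assert (HPI : 0 < PI) by apply PI_RGT_0.
  assert (Hom : forall i, (i < N)%nat -> Rabs (omega i) <= Om) by (intros; apply rmaxabs_ge; auto).
  assert (HOm : 0 <= Om) by apply rmaxabs_nonneg.
  set (P := rpow (PI - alpha0) p).
  assert (HP0 : 0 < P) by (apply rpow_pos; lra).
  assert (HL : 0 < L) by (unfold L; nra).
  assert (HLR : L < R0) by (unfold L; nra).
  assert (Hk2 : kappa > 2 / (c1 * c3 * P) * Om / R0).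
  { eapply Rle_lt_trans; [apply Rmax_r| apply Hkappa]. }
  assert (Hkpos : 0 < kappa).
  { eapply Rle_lt_trans; [|apply Hk2]. apply Rdiv_nonneg; auto. apply Rmult_le_pos; auto.
    apply Rdiv_nonneg; [lra|]. apply Rmult_lt_0_compat; auto; nra. }
  assert (Hk2' : kappa * L * c1 * P > Om).
  { assert (HH : kappa * (L * c1 * P) > 2 / (c1 * c3 * P) * Om / R0 * (L * c1 * P)).
    { apply Rmult_gt_compat_r; auto. apply Rmult_lt_0_compat; auto; nra. }
    replace (2 / (c1 * c3 * P) * Om / R0 * (L * c1 * P)) with Om in HH
      by (unfold L; field; repeat split; lra).
    lra. }
  set (rho := Om / (kappa * L * c1 * P)).
  assert (HkLcP : 0 < kappa * L * c1 * P) by (apply Rmult_lt_0_compat; [apply Rmult_lt_0_compat; [apply Rmult_lt_0_compat|]|]; lra).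
  assert (Hrho0 : 0 <= rho) by (apply Rdiv_nonneg; auto).
  assert (Hrho1 : rho < 1).
  { unfold rho. apply (Rmult_lt_reg_r (kappa * L * c1 * P)); auto.
    unfold Rdiv; rewrite Rmult_assoc, Rinv_l by lra. lra. }
  assert (Hp0 : 0 < p) by lra. assert (Hq0 : 0 < q) by lra.
  assert (Hrr : rpow rho (1/p) < 1).
  { destruct (Req_dec rho 0) as [->|Hne].
    - rewrite rpow_zero; lra.
    - rewrite rpow_pos_eq by lra. apply Rpower_lt1; [lra|]. apply Rdiv_lt_0_compat; lra. }
  set (xa := (PI - alpha0) * Rmax (1/2) (rpow rho (1/p))).
  assert (Hmx1 : 1/2 <= Rmax (1/2) (rpow rho (1/p))) by apply Rmax_l.
  assert (Hmx2 : Rmax (1/2) (rpow rho (1/p)) < 1) by (apply Rmax_lub_lt; lra).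
  assert (Hxa0 : 0 < xa) by (unfold xa; nra).
  assert (Hxa1 : xa < PI - alpha0) by (unfold xa; nra).
  assert (HxaB : kappa * L * c1 * rpow xa p >= Om).
  { destruct (Req_dec Om 0) as [E0|Hne].
    - rewrite E0. assert (0 <= rpow xa p) by apply rpow_nonneg.
      apply Rle_ge. apply Rmult_le_pos; [|lra]. apply Rmult_le_pos; [|lra]. apply Rmult_le_pos; lra.
    - assert (Hrp : 0 < rho) by (unfold rho; apply Rdiv_lt_0_compat; lra).
      assert (Hm : rpow ((PI - alpha0) * rpow rho (1/p)) p <= rpow xa p).
      { apply rpow_mono; auto. assert (0 <= rpow rho (1/p)) by apply rpow_nonneg. split.
        - apply Rmult_le_pos; lra.
        - unfold xa. apply Rmult_le_compat_l; [lra| apply Rmax_r]. }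
      assert (Hrr0 : 0 < rpow rho (1/p)) by (apply rpow_pos; auto).
      rewrite rpow_pos_eq in Hm by (apply Rmult_lt_0_compat; lra).
      rewrite <- Rpower_mult_distr in Hm by lra.
      rewrite rpow_pos_eq in Hm by auto. rewrite Rpower_mult in Hm.
      replace (1 / p * p) with 1 in Hm by (field; lra). rewrite Rpower_1 in Hm by auto.
      fold (rpow (PI - alpha0) p) in Hm. 
      rewrite <- (rpow_pos_eq (PI - alpha0)) in Hm by lra. fold P in Hm.
      assert (kappa * L * c1 * (P * rho) <= kappa * L * c1 * rpow xa p).
      { apply Rmult_le_compat_l; [left; apply Rmult_lt_0_compat; [apply Rmult_lt_0_compat|]; lra|auto]. }
      replace (kappa * L * c1 * (P * rho)) with Om in H by (unfold rho; field; lra). lra. }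
  set (xb := Rpower (R0 / (2 * c2)) (1 / q)).
  assert (Hxb0 : 0 < xb) by (unfold xb, Rpower; apply exp_pos).
  assert (Hr2c : 0 < R0 / (2 * c2)) by (apply Rdiv_lt_0_compat; lra).
  assert (Hxbq : rpow xb q = R0 / (2 * c2)).
  { rewrite rpow_pos_eq by auto. unfold xb. rewrite Rpower_mult.
    replace (1 / q * q) with 1 by (field; lra). apply Rpower_1; auto. }
  assert (HxbB : kappa * L * c1 * rpow xb p >= Om).
  { set (A := Rpower R0 (p / q)). set (Cc := Rpower (2 * c2) (p / q)).
    assert (HA : 0 < A) by (unfold A, Rpower; apply exp_pos).
    assert (HC : 0 < Cc) by (unfold Cc, Rpower; apply exp_pos).
    assert (E1 : rpow xb p = A / Cc).
    { rewrite rpow_pos_eq by auto. unfold xb. rewrite Rpower_mult.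
      replace (1 / q * p) with (p / q) by (field; lra).
      unfold Rdiv at 1. rewrite <- Rpower_mult_distr by (auto; apply Rinv_0_lt_compat; lra).
      rewrite Rpower_inv by lra. fold A Cc. unfold Rdiv; ring. }
    assert (E2 : rpow R0 (1 + p / q) = R0 * A).
    { rewrite rpow_pos_eq by auto. rewrite Rpower_plus, Rpower_1 by auto. auto. }
    assert (E3 : rpow (2 * c2) (p / q) = Cc) by (apply rpow_pos_eq; lra).
    assert (Hk1 : kappa > 2 * Cc / (c1 * c3) * Om / (R0 * A)).
    { rewrite <- E2, <- E3. eapply Rle_lt_trans; [apply Rmax_l| apply Hkappa]. }
    rewrite E1.
    assert (HH : kappa * (L * c1 * (A / Cc)) > 2 * Cc / (c1 * c3) * Om / (R0 * A) * (L * c1 * (A / Cc))).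
    { apply Rmult_gt_compat_r; auto. assert (0 < A/Cc) by (apply Rdiv_lt_0_compat; lra). apply Rmult_lt_0_compat; [apply Rmult_lt_0_compat|]; lra. }
    replace (2 * Cc / (c1 * c3) * Om / (R0 * A) * (L * c1 * (A / Cc))) with Om in HH
      by (unfold L; field; repeat split; lra).
    lra. }
  set (x := Rmin xa xb).
  assert (Hx0 : 0 < x) by (unfold x; apply Rmin_pos; auto).
  assert (Hx1 : x < PI - alpha0) by (unfold x; eapply Rle_lt_trans; [apply Rmin_l|auto]).
  assert (HxB : kappa * L * c1 * rpow x p >= Om) by (unfold x; apply Rmin_case; auto).
  assert (HxC : c2 * rpow x q <= R0 / 2).
  { assert (rpow x q <= rpow xb q) by (apply rpow_mono; [lra| split; [lra| apply Rmin_r]]).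
    rewrite Hxbq in H. assert (c2 * rpow x q <= c2 * (R0 / (2 * c2))) by (apply Rmult_le_compat_l; lra).
    replace (c2 * (R0 / (2 * c2))) with (R0 / 2) in H0 by (field; lra). auto. }
  set (ths := PI - x).
  assert (Hths : alpha0 < ths < PI) by (unfold ths; lra).
  assert (Hthsx : ths = PI - x) by reflexivity. clearbody ths x.

  set (vel := fun i t => omega i + kappa / INR N * rsum N (fun j => I (theta j t)) * S (theta i t)).
  set (Rt := fun t => avg_infl N I theta t).
  assert (HNpos : 0 < INR N) by (apply lt_0_INR; lia).
  assert (Hvel : forall i t, vel i t = omega i + kappa * Rt t * S (theta i t)).
  { intros. unfold vel, Rt, avg_infl. unfold Rdiv. ring. }
  assert (HxP : 0 < rpow x p) by (apply rpow_pos; auto).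
  assert (vel_neg : forall i t k, (i < N)%nat -> Rt t > L ->
            alpha0 <= theta i t - 2*PI*IZR k <= ths -> vel i t < 0).
  { intros i t k Hi HRt Hv. rewrite Hvel.
    rewrite <- (per_Zm S HSper k (theta i t)).
    assert (HS := HS1 (theta i t - 2*PI*IZR k) ltac:(lra)).
    assert (rpow x p <= rpow (PI - (theta i t - 2 * PI * IZR k)) p) by (apply rpow_mono; lra).
    assert (Ho := Hom i Hi). apply absle in Ho.
    assert (HkR : 0 < kappa * Rt t) by (apply Rmult_lt_0_compat; lra).
    assert (kappa * Rt t * S (theta i t - 2 * PI * IZR k) <= kappa * Rt t * (- c1 * rpow x p)).
    { apply Rmult_le_compat_l; [lra|]. nra. }
    assert (kappa * L * c1 * rpow x p < kappa * Rt t * c1 * rpow x p).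
    { apply Rmult_lt_compat_r; auto. apply Rmult_lt_compat_r; auto. apply Rmult_lt_compat_l; lra. }
    lra. }
  assert (vel_pos : forall i t k, (i < N)%nat -> Rt t > L ->
            - ths <= theta i t - 2*PI*IZR k <= - alpha0 -> vel i t > 0).
  { intros i t k Hi HRt Hv. rewrite Hvel.
    rewrite <- (per_Zm S HSper k (theta i t)).
    assert (HS := HS2 (theta i t - 2*PI*IZR k) ltac:(lra)).
    assert (rpow x p <= rpow ((theta i t - 2 * PI * IZR k) + PI) p) by (apply rpow_mono; lra).
    assert (Ho := Hom i Hi). apply absle in Ho.
    assert (HkR : 0 < kappa * Rt t) by (apply Rmult_lt_0_compat; lra).
    assert (kappa * Rt t * (c1 * rpow x p) <= kappa * Rt t * S (theta i t - 2 * PI * IZR k)).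
    { apply Rmult_le_compat_l; [lra|]. nra. }
    assert (kappa * L * c1 * rpow x p < kappa * Rt t * c1 * rpow x p).
    { apply Rmult_lt_compat_r; auto. apply Rmult_lt_compat_r; auto. apply Rmult_lt_compat_l; lra. }
    lra. }
  assert (Hcth : forall i, (i < N)%nat -> Cont (theta i)).
  { intros i Hi. apply (Cont_of_deriv (theta i) (vel i)); [|apply Hcont0; auto].
    intros t Ht. apply Hode; auto. }
  assert (HcR : Cont Rt).
  { unfold Rt, avg_infl. apply (Cont_scal (/ INR N) (fun t => rsum N (fun j => I (theta j t)))).
    apply (Cont_rsum N (fun j t => I (theta j t))). intros j Hj.
    apply (Cont_lip I (theta j)); auto. }
  assert (up_bar : forall i k t0 T, (i < N)%nat -> 0 <= t0 ->
            (forall t, t0 < t < T -> Rt t > L) -> theta i t0 - 2*PI*IZR k < ths ->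
            forall t, t0 <= t <= T -> theta i t - 2*PI*IZR k <= Rmax (theta i t0 - 2*PI*IZR k) alpha0).
  { intros i k t0 T Hi Ht0 HRT H0 t Ht.
    apply (barrier (fun t => theta i t - 2*PI*IZR k) (vel i) alpha0 ths t0 T); auto; try lra.
    - apply (Cont_plus (theta i) (fun _ => - (2*PI*IZR k))); auto. apply Cont_const.
    - intros t' Ht'. apply dshift. apply Hode; auto; lra.
    - intros t' Ht' Hb. apply (vel_neg i t' k); auto. }
  assert (lo_bar : forall i k t0 T, (i < N)%nat -> 0 <= t0 ->
            (forall t, t0 < t < T -> Rt t > L) -> - ths < theta i t0 - 2*PI*IZR k ->
            forall t, t0 <= t <= T -> - Rmax (- (theta i t0 - 2*PI*IZR k)) alpha0 <= theta i t - 2*PI*IZR k).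
  { intros i k t0 T Hi Ht0 HRT H0 t Ht.
    assert (B := barrier (fun t => 2*PI*IZR k - theta i t) (fun t => - vel i t) alpha0 ths t0 T).
    replace (- (theta i t0 - 2 * PI * IZR k)) with (2*PI*IZR k - theta i t0) by ring.
    assert (2 * PI * IZR k - theta i t <= Rmax (2 * PI * IZR k - theta i t0) alpha0); [|lra].
    apply B; auto; try lra.
    - apply Cont_bminus; auto.
    - intros t' Ht'. apply dneg. apply Hode; auto; lra.
    - intros t' Ht' Hb. assert (vel i t' > 0); [|lra]. apply (vel_pos i t' k); auto; lra. }

  assert (two_succ : forall K, 2*PI*IZR (K+1) = 2*PI*IZR K + 2*PI).
  { intro K. rewrite plus_IZR. simpl IZR. ring. }
  assert (classify : forall y, (exists k, Rabs (y - 2*PI*IZR k) < ths) \/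
                              (exists K, ths <= y - 2*PI*IZR K <= 2*PI - ths)).
  { intro y. destruct (floor_red y) as [K HK].
    destruct (Rlt_or_le (y - 2*PI*IZR K) ths).
    - left. exists K. rewrite Rabs_right; lra.
    - destruct (Rlt_or_le (2*PI - ths) (y - 2*PI*IZR K)).
      + left. exists (K+1)%Z. rewrite two_succ. rewrite Rabs_left; lra.
      + right. exists K. lra. }
  assert (Inn : forall y, 0 <= I y).
  { intro y. destruct (floor_red y) as [K HK]. rewrite <- (per_Zm I HIper K y).
    set (v := y - 2*PI*IZR K) in *.
    destruct (Rle_or_lt v PI).
    - apply HI1; lra.
    - replace (I v) with (I (v - 2*PI)) by (rewrite <- (HIper (v - 2*PI)); f_equal; ring). apply HI1; lra. }
  assert (Ibad : forall y K, ths <= y - 2*PI*IZR K <= 2*PI - ths -> I y <= R0/2).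
  { intros y K HK. rewrite <- (per_Zm I HIper K y).
    set (v := y - 2*PI*IZR K) in *.
    destruct (Rle_or_lt v PI).
    - destruct (HI1 v ltac:(lra)) as [_ Hb]. rewrite Rabs_right in Hb by lra.
      assert (rpow (PI - v) q <= rpow x q) by (apply rpow_mono; lra).
      assert (c2 * rpow (PI - v) q <= c2 * rpow x q) by (apply Rmult_le_compat_l; lra). lra.
    - replace (I v) with (I (v - 2*PI)) by (rewrite <- (HIper (v - 2*PI)); f_equal; ring).
      destruct (HI1 (v - 2*PI) ltac:(lra)) as [_ Hb]. rewrite Rabs_left in Hb by lra.
      assert (rpow (PI - - (v - 2*PI)) q <= rpow x q) by (apply rpow_mono; lra).
      assert (c2 * rpow (PI - - (v - 2*PI)) q <= c2 * rpow x q) by (apply Rmult_le_compat_l; lra). lra. }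
  assert (Hmaxabs : forall u, Rmax u alpha0 <= Rmax (Rabs u) alpha0 /\ Rmax (- u) alpha0 <= Rmax (Rabs u) alpha0).
  { intro u. assert (u <= Rabs u) by apply RRle_abs.
    assert (- u <= Rabs u) by (rewrite <- Rabs_Ropp; apply RRle_abs).
    assert (Rabs u <= Rmax (Rabs u) alpha0) by apply Rmax_l.
    assert (alpha0 <= Rmax (Rabs u) alpha0) by apply Rmax_r.
    split; apply Rmax_lub; lra. }
  assert (HR0sum : rsum N (fun j => I (theta j 0)) = INR N * R0).
  { unfold R0, avg_infl. field. lra. }
  assert (PartA : forall t, 0 <= t -> Rt t > L).
  { intros t Ht. destruct (Rle_or_lt (Rt t) L) as [Hle|]; [exfalso|auto].
    destruct (first_time Rt L t HcR ltac:(unfold Rt; fold R0; lra) Ht Hle) as [T [HT [HRT Hbef]]].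
    assert (HRT' : forall t', 0 < t' < T -> Rt t' > L) by (intros; apply Hbef; lra).
    assert (Hgood : forall j k, (j < N)%nat -> Rabs (theta j 0 - 2*PI*IZR k) < ths ->
                I (theta j T) > c3 * (I (theta j 0) - R0/2)).
    { intros j k Hj Hu. set (u := theta j 0 - 2*PI*IZR k) in *.
      apply absle' in Hu.
      assert (U := up_bar j k 0 T Hj ltac:(lra) HRT' ltac:(unfold u in Hu; lra) T ltac:(lra)).
      assert (D := lo_bar j k 0 T Hj ltac:(lra) HRT' ltac:(unfold u in Hu; lra) T ltac:(lra)).
      fold u in U, D. destruct (Hmaxabs u).
      assert (Hphi : Rabs (theta j T - 2*PI*IZR k) <= Rmax (Rabs u) alpha0) by (apply Rabs_le; lra).
      assert (HI := HI2 u ltac:(lra) _ Hphi).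
      rewrite (per_Zm I HIper) in HI. unfold u in HI. rewrite (per_Zm I HIper) in HI.
      assert (0 <= I (theta j 0)) by apply Inn. nra. }
    assert (Hall : forall j, (j < N)%nat -> I (theta j T) >= c3 * (I (theta j 0) - R0/2)).
    { intros j Hj. destruct (classify (theta j 0)) as [[k Hk]|[K HK]].
      - left. apply (Hgood j k); auto.
      - apply Ibad in HK. assert (0 <= I (theta j T)) by apply Inn. nra. }
    assert (Hex : exists j, (j < N)%nat /\ exists k, Rabs (theta j 0 - 2*PI*IZR k) < ths).
    { apply NNPP. intro Hn.
      assert (rsum N (fun j => I (theta j 0)) <= rsum N (fun _ => R0/2)).
      { apply rsum_le. intros j Hj. destruct (classify (theta j 0)) as [Hk|[K HK]].
        - exfalso; apply Hn; exists j; auto.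
        - apply (Ibad _ K HK). }
      rewrite rsum_const, HR0sum in H. nra. }
    assert (Hsum : rsum N (fun j => c3 * (I (theta j 0) - R0/2)) < rsum N (fun j => I (theta j T))).
    { apply rsum_lt.
      - intros j Hj. apply Rge_le, Hall; auto.
      - destruct Hex as [j [Hj [k Hk]]]. exists j. split; auto. apply (Hgood j k); auto. }
    rewrite rsum_lin, HR0sum in Hsum.
    unfold Rt, avg_infl in HRT.
    assert (/ INR N * (c3 * (INR N * R0 - INR N * (R0 / 2))) < / INR N * rsum N (fun j => I (theta j T))).
    { apply Rmult_lt_compat_l; auto. apply Rinv_0_lt_compat; auto. }
    replace (/ INR N * (c3 * (INR N * R0 - INR N * (R0 / 2)))) with L in H by (unfold L; field; lra).
    lra. }
  split.
  { intros t Ht. apply PartA; auto. }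
  intros i Hi.
  assert (HRall : forall t0 T, 0 <= t0 -> forall t, t0 < t < T -> Rt t > L) by (intros; apply PartA; lra).
  destruct (classify (theta i 0)) as [[k Hk]|[K HK]].
  - set (u := theta i 0 - 2*PI*IZR k) in *. apply absle' in Hk.
    apply (range_lem (theta i) (2*PI*IZR k - Rmax (- u) alpha0) (2*PI*IZR k + Rmax u alpha0)).
    + intros t Ht.
      assert (U := up_bar i k 0 t Hi ltac:(lra) (HRall 0 t ltac:(lra)) ltac:(unfold u in Hk; lra) t ltac:(lra)).
      assert (D := lo_bar i k 0 t Hi ltac:(lra) (HRall 0 t ltac:(lra)) ltac:(unfold u in Hk; lra) t ltac:(lra)).
      fold u in U, D. lra.
    + assert (Rmax u alpha0 < ths) by (apply Rmax_lub_lt; lra).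
      assert (Rmax (- u) alpha0 < ths) by (apply Rmax_lub_lt; lra). lra.
  - set (phi := fun t => theta i t - 2*PI*IZR K).
    assert (Glo : forall t, 0 <= t -> - alpha0 <= phi t).
    { intros t Ht. assert (D := lo_bar i K 0 t Hi ltac:(lra) (HRall 0 t ltac:(lra)) ltac:(lra) t ltac:(lra)).
      rewrite Rmax_right in D by lra. unfold phi; lra. }
    assert (Gup : forall t, 0 <= t -> phi t <= 2*PI + alpha0).
    { intros t Ht. assert (U := up_bar i (K+1)%Z 0 t Hi ltac:(lra) (HRall 0 t ltac:(lra)) ltac:(rewrite two_succ; lra) t ltac:(lra)).
      rewrite two_succ in U. rewrite Rmax_right in U by lra. unfold phi; lra. }
    destruct (classic (forall t, 0 <= t -> ths <= phi t)) as [Hc1'|Hn1].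
    { apply (range_lem (theta i) (2*PI*IZR K + ths) (2*PI*IZR K + 2*PI + alpha0)); [|lra].
      intros t Ht. assert (A := Hc1' t Ht). assert (B := Gup t Ht). unfold phi in *; lra. }
    destruct (classic (forall t, 0 <= t -> phi t <= 2*PI - ths)) as [Hc2'|Hn2].
    { apply (range_lem (theta i) (2*PI*IZR K - alpha0) (2*PI*IZR K + 2*PI - ths)); [|lra].
      intros t Ht. assert (A := Hc2' t Ht). assert (B := Glo t Ht). unfold phi in *; lra. }
    exfalso.
    apply not_all_ex_not in Hn1. destruct Hn1 as [td Htd].
    apply imply_to_and in Htd. destruct Htd as [Htd0 Htd].
    apply not_all_ex_not in Hn2. destruct Hn2 as [tu Htu].
    apply imply_to_and in Htu. destruct Htu as [Htu0 Htu].
    apply Rnot_le_lt in Htd. apply Rnot_le_lt in Htu.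
    destruct (Rle_or_lt td tu).
    + assert (U := up_bar i K td tu Hi Htd0 (HRall td tu Htd0) Htd tu ltac:(lra)).
      assert (Rmax (theta i td - 2 * PI * IZR K) alpha0 < ths) by (apply Rmax_lub_lt; [apply Htd|lra]).
      unfold phi in Htu. lra.
    + assert (D := lo_bar i (K+1)%Z tu td Hi Htu0 (HRall tu td Htu0) ltac:(rewrite two_succ; unfold phi in Htu; lra) td ltac:(lra)).
      rewrite two_succ in D.
      assert (Rmax (- (theta i tu - (2 * PI * IZR K + 2 * PI))) alpha0 < ths) by (apply Rmax_lub_lt; unfold phi in Htu; lra).
      unfold phi in Htd. lra.
Qed.
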